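(* Let $G=\mathrm{GL}_2(F)$, let $N$ be the subgroup of upper triangular unipotent matrices, $A$ the subgroup of diagonal matrices and $K_A=A\cap\mathrm{GL}_2(\mathcal{O})$ the group of diagonal matrices with unit entries. Consider the action of $A\times K_A$ on $N\backslash G$ given by $(a,k)\cdot Ng = Nagk^{-1}$. Then a set of representatives for the orbits of this action is given by the cosets of the matrices $$\begin{pmatrix}1&0\\ \varpi^{\gamma}&1\end{pmatrix},\ 0\le \gamma\le\infty,\qquad \begin{pmatrix}0&1\\ 1&\varpi^{\gamma}\end{pmatrix},\ 1\le\gamma\le\infty;$$ that is, every orbit contains exactly one of these cosets.
   Context: $F$ is a non-archimedean local field of characteristic $0$ with ring of integers $\mathcal{O}$, uniformiser $\varpi$ and valuation $v$ with $v(\varpi)=1$. By convention $\varpi^{\infty}=0$. $A$ normalises $N$, so left multiplication by $A$ and right multiplication by $K_A$ give a well-defined two-sided action on $N\backslash G$. *)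

(* Defs.v *)
From HB Require Import structures.
From mathcomp Require Import all_boot all_order all_algebra.
Set Implicit Arguments. Unset Strict Implicit. Unset Printing Implicit Defensive.
Import Order.TTheory GRing.Theory Num.Theory.
Local Open Scope ring_scope.

(* A valuation v : F -> int is only meaningful on nonzero elements; v(0)=+oo
   is encoded by [vge]: "v x >= M" holds for x = 0 for every M. *)
Definition vge (F : fieldType) (v : F -> int) (x : F) (M : int) : Prop :=
  x = 0 \/ (M <= v x)%R.

Definition in_O (F : fieldType) (v : F -> int) (x : F) : Prop := vge v x 0.

Record nonarch_local_field (F : fieldType) (v : F -> int) (w : F) : Prop := {
  nalf_char0 : [pchar F] =i pred0;
  nalf_mul : forall x y : F, x != 0 -> y != 0 -> v (x * y) = v x + v y;
  nalf_add : forall x y : F, x != 0 -> y != 0 -> x + y != 0 ->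
               Order.min (v x) (v y) <= v (x + y);
  nalf_unif_nz : w != 0;
  nalf_unif : v w = 1;
  nalf_complete : forall u : nat -> F,
      (forall M : int, exists N : nat, forall m n : nat,
           (N <= m)%N -> (N <= n)%N -> vge v (u m - u n) M) ->
      exists l : F, forall M : int, exists N : nat, forall n : nat,
           (N <= n)%N -> vge v (u n - l) M;
  nalf_residue_finite : exists s : seq F,
      (forall y, y \in s -> in_O v y) /\
      (forall x, in_O v x -> exists2 y, y \in s & vge v (x - y) 1)
}.

Definition mx2 (F : fieldType) (a b c d : F) : 'M[F]_2 :=
  \matrix_(i < 2, j < 2)
    if (i == 0 :> nat) then (if (j == 0 :> nat) then a else b)
    else (if (j == 0 :> nat) then c else d).

(* w ^ gamma with gamma in {0,1,...} u {oo}; w ^ oo = 0 *)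
Definition wpow (F : fieldType) (w : F) (g : option nat) : F :=
  match g with Some n => w ^+ n | None => 0 end.

Definition is_Ounit (F : fieldType) (v : F -> int) (x : F) : Prop :=
  x != 0 /\ v x = 0.

Definition same_orbit (F : fieldType) (v : F -> int) (g h : 'M[F]_2) : Prop :=
  exists (x a d k1 k2 : F),
    [/\ a != 0, d != 0, is_Ounit v k1, is_Ounit v k2 &
      h = mx2 1 x 0 1 *m mx2 a 0 0 d *m g *m invmx (mx2 k1 0 0 k2)].

Definition same_Ncoset (F : fieldType) (g h : 'M[F]_2) : Prop :=
  exists x : F, h = mx2 1 x 0 1 *m g.

Definition is_rep (F : fieldType) (w : F) (r : 'M[F]_2) : Prop :=
  (exists g : option nat, r = mx2 1 0 (wpow w g) 1) \/
  (exists g : option nat,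
      (match g with Some n => (1 <= n)%N | None => true end) /\
      r = mx2 0 1 1 (wpow w g)).

(* Main.v *)
Require Import Defs.
From mathcomp Require Import all_boot all_order all_algebra.
From mathcomp Require Import ring zify.
Import Order.TTheory GRing.Theory Num.Theory.
Set Implicit Arguments. Unset Strict Implicit. Unset Printing Implicit Defensive.
Local Open Scope ring_scope.

Section S.
Variable F : fieldType.

Lemma mx2E (M : 'M[F]_2) : M = mx2 (M 0 0) (M 0 1) (M 1 0) (M 1 1).
Proof.
apply/matrixP => i j; rewrite !mxE.
case: i => [[|[|i]] Hi]; case: j => [[|[|j]] Hj] //=;
  congr (M _ _); apply: val_inj => //.
Qed.

Lemma mx2_00 (a b c d : F) : mx2 a b c d 0 0 = a. Proof. by rewrite mxE. Qed.
Lemma mx2_01 (a b c d : F) : mx2 a b c d 0 1 = b. Proof. by rewrite mxE. Qed.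
Lemma mx2_10 (a b c d : F) : mx2 a b c d 1 0 = c. Proof. by rewrite mxE. Qed.
Lemma mx2_11 (a b c d : F) : mx2 a b c d 1 1 = d. Proof. by rewrite mxE. Qed.

Lemma mx2M (a b c d a' b' c' d' : F) :
  mx2 a b c d *m mx2 a' b' c' d' =
  mx2 (a * a' + b * c') (a * b' + b * d') (c * a' + d * c') (c * b' + d * d').
Proof.
apply/matrixP => i j; rewrite !mxE !big_ord_recr big_ord0 /= !mxE /=.
case: i => [[|[|i]] Hi]; case: j => [[|[|j]] Hj] //=; by rewrite add0r.
Qed.

Lemma mx2_1 : (1%:M : 'M[F]_2) = mx2 1 0 0 1.
Proof.
apply/matrixP => i j; rewrite !mxE.
case: i => [[|[|i]] Hi]; case: j => [[|[|j]] Hj] //=.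
Qed.

Lemma mx2_0 : (0 : 'M[F]_2) = mx2 0 0 0 0.
Proof.
apply/matrixP => i j; rewrite !mxE.
case: i => [[|[|i]] Hi]; case: j => [[|[|j]] Hj] //=.
Qed.

Lemma mx2_eq (a b c d a' b' c' d' : F) :
  a = a' -> b = b' -> c = c' -> d = d' -> mx2 a b c d = mx2 a' b' c' d'.
Proof. by move=> -> -> -> ->. Qed.

Lemma inv_diag (k1 k2 : F) : k1 != 0 -> k2 != 0 ->
  invmx (mx2 k1 0 0 k2) = mx2 k1^-1 0 0 k2^-1.
Proof.
move=> h1 h2.
have H : mx2 k1 0 0 k2 *m mx2 k1^-1 0 0 k2^-1 = 1%:M.
  rewrite mx2M mx2_1; apply: mx2_eq; rewrite ?mulfV //; ring.
have [U _] := mulmx1_unit H.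
by rewrite -[invmx _]mulmx1 -H mulmxA mulVmx // mul1mx.
Qed.

Lemma unit_det (g : 'M[F]_2) : g \in unitmx -> g 0 0 * g 1 1 - g 0 1 * g 1 0 != 0.
Proof.
move=> U; apply/negP => /eqP D.
have H : g *m mx2 (g 1 1) (- g 0 1) (- g 1 0) (g 0 0) = 0.
  rewrite {1}[g]mx2E mx2M mx2_0; apply: mx2_eq.
  - by rewrite -D; ring.
  - ring.
  - ring.
  - by rewrite -D; ring.
have H2 : mx2 (g 1 1) (- g 0 1) (- g 1 0) (g 0 0) = 0.
  by rewrite -[mx2 _ _ _ _]mul1mx -(mulVmx U) -mulmxA H mulmx0.
have e1 := congr1 (fun M : 'M[F]_2 => M 0 0) H2.
have e2 := congr1 (fun M : 'M[F]_2 => M 0 1) H2.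
have e3 := congr1 (fun M : 'M[F]_2 => M 1 0) H2.
have e4 := congr1 (fun M : 'M[F]_2 => M 1 1) H2.
move: e1 e2 e3 e4 => /=; rewrite !mx2_00 !mx2_01 !mx2_10 !mx2_11 !mxE.
move=> e1 /eqP; rewrite oppr_eq0 => /eqP e2 /eqP; rewrite oppr_eq0 => /eqP e3 e4.
have E : g = 0 by rewrite [g]mx2E e1 e2 e3 e4; apply/matrixP => i j; rewrite !mxE;
  case: i => [[|[|i]] Hi]; case: j => [[|[|j]] Hj].
move: U; rewrite E => U; have := mulmxV U; rewrite mul0mx => /matrixP/(_ 0 0).
by rewrite !mxE /= => /eqP; rewrite eq_sym oner_eq0.
Qed.

Lemma orbit_formula (x a d p q r s k1 k2 : F) : k1 != 0 -> k2 != 0 ->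
  mx2 1 x 0 1 *m mx2 a 0 0 d *m mx2 p q r s *m invmx (mx2 k1 0 0 k2) =
  mx2 ((a * p + x * d * r) / k1) ((a * q + x * d * s) / k2) (d * r / k1) (d * s / k2).
Proof.
move=> h1 h2; rewrite inv_diag // !mx2M; apply: mx2_eq; ring.
Qed.

Lemma Ncoset_refl (r : 'M[F]_2) : same_Ncoset r r.
Proof. by exists 0; rewrite -mx2_1 mul1mx. Qed.

Variable v : F -> int.
Variable w : F.
Hypothesis HF : nonarch_local_field v w.

Lemma vmul x y : x != 0 -> y != 0 -> v (x * y) = v x + v y.
Proof. move=> hx hy; exact: (nalf_mul HF hx hy). Qed.

Lemma v1 : v 1 = 0.
Proof.
have := vmul (oner_neq0 F) (oner_neq0 F); rewrite mulr1 => h.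
by apply: (addrI (v 1)); rewrite addr0 -h.
Qed.

Lemma vinv k : k != 0 -> v k^-1 = - v k.
Proof.
move=> hk; have := vmul hk (invr_neq0 hk); rewrite mulfV // v1 => /eqP.
by rewrite eq_sym addr_eq0 => /eqP ->; rewrite opprK.
Qed.

Lemma wnz : w != 0. Proof. exact: nalf_unif_nz HF. Qed.
Lemma wpnz n : w ^+ n != 0. Proof. exact: expf_neq0 wnz. Qed.

Lemma vpow n : v (w ^+ n) = n%:Z.
Proof.
elim: n => [|n IH]; first by rewrite expr0 v1.
by rewrite exprS vmul ?wnz ?wpnz // IH (nalf_unif HF) -addn1 PoszD addrC.
Qed.

Lemma Ounit1 : is_Ounit v 1.
Proof. by split; [apply: oner_neq0 | apply: v1]. Qed.

Lemma decomp t : t != 0 ->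
  (exists n u, t = w ^+ n * u /\ is_Ounit v u) \/
  (exists m u, t = u / w ^+ m.+1 /\ is_Ounit v u).
Proof.
move=> ht; case E: (v t) => [n|m].
- left; exists n, (t / w ^+ n); split.
    by rewrite mulrC mulfVK ?wpnz.
  split; first by rewrite mulf_neq0 ?invr_neq0 ?wpnz.
  by rewrite vmul ?invr_neq0 ?wpnz // vinv ?wpnz // vpow E subrr.
- right; exists m, (t * w ^+ m.+1); split.
    by rewrite mulfK ?wpnz.
  split; first by rewrite mulf_neq0 ?wpnz.
  by rewrite vmul ?wpnz // vpow E NegzE addrC subrr.
Qed.

Lemma inv_lemma (d k1 k2 c dd c' dd' : F) : d != 0 -> is_Ounit v k1 -> is_Ounit v k2 ->
  c' = d * c / k1 -> dd' = d * dd / k2 ->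
  [/\ (c == 0) = (c' == 0), (dd == 0) = (dd' == 0) &
      c != 0 -> dd != 0 -> v c' - v dd' = v c - v dd].
Proof.
move=> hd [k1n k1v] [k2n k2v] -> ->; split.
- by rewrite !mulf_eq0 invr_eq0 (negbTE hd) (negbTE k1n) orbF.
- by rewrite !mulf_eq0 invr_eq0 (negbTE hd) (negbTE k2n) orbF.
move=> hc hdd.
rewrite !vmul ?mulf_neq0 ?invr_neq0 // !vinv // k1v k2v !oppr0 !addr0.
by rewrite opprD addrACA subrr add0r.
Qed.

End S.

Theorem proposition5p1 (F : fieldType) (v : F -> int) (w : F)
    (HF : nonarch_local_field v w) :
  (forall g : 'M[F]_2, g \in unitmx ->
     exists r : 'M[F]_2, is_rep w r /\ same_orbit v g r) /\
  (forall r1 r2 : 'M[F]_2, is_rep w r1 -> is_rep w r2 ->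
     same_orbit v r1 r2 -> same_Ncoset r1 r2).
Proof.
split.
- move=> g U; have D := unit_det U; move: D (mx2E g).
  move: (g 0 0) (g 0 1) (g 1 0) (g 1 1) => p q r s D ->.
  have O1 := Ounit1 HF.
  have [r0|rn] := eqVneq r 0.
    subst r; rewrite mulr0 subr0 mulf_eq0 negb_or in D; case/andP: D => pn sn.
    exists (mx2 1 0 0 1); split; first by left; exists None.
    exists (-q/p), (1/p), (1/s), 1, 1; split => //; rewrite ?div1r ?invr_neq0 //.
    rewrite orbit_formula ?oner_neq0 //; apply: mx2_eq; field; by rewrite ?oner_neq0 ?pn ?sn.
  have [s0|sn] := eqVneq s 0.
    subst s; rewrite mulr0 sub0r oppr_eq0 mulf_eq0 negb_or in D; case/andP: D => qn _.
    exists (mx2 0 1 1 0); split; first by right; exists None.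
    exists (-p/q), (1/q), (1/r), 1, 1; split => //; rewrite ?div1r ?invr_neq0 //.
    rewrite orbit_formula ?oner_neq0 //; apply: mx2_eq; field; by rewrite ?oner_neq0 ?qn ?rn.
  have tn : r / s != 0 by rewrite mulf_neq0 ?invr_neq0.
  case: (decomp HF tn) => [[n [u [ht [un uv]]]]|[m [u [ht [un uv]]]]].
    have hr : r = w ^+ n * u * s by rewrite -ht mulfVK.
    subst r.
    exists (mx2 1 0 (w ^+ n) 1); split; first by left; exists (Some n).
    pose De := p * s - q * (w ^+ n * u * s).
    exists (- (s * u / De) * q), (s * u / De), (1/s), u, 1; split => //;
      rewrite ?div1r ?invr_neq0 ?mulf_neq0 ?invr_neq0 //.
    rewrite orbit_formula ?oner_neq0 //; apply: mx2_eq; rewrite /De; field; by rewrite ?oner_neq0 ?un ?sn ?D.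
  have hr : r = u / w ^+ m.+1 * s by rewrite -ht mulfVK.
  subst r.
  exists (mx2 0 1 1 (w ^+ m.+1)); split; first by right; exists (Some m.+1).
  pose De := p * s - q * (u / w ^+ m.+1 * s).
  pose a := - (u / w ^+ m.+1 * s) / De.
  pose d := w ^+ m.+1 / s.
  exists (- a * p / (d * (u / w ^+ m.+1 * s))), a, d, u, 1; split => //.
  + by rewrite /a mulf_neq0 ?oppr_eq0 ?invr_neq0.
  + by rewrite /d mulf_neq0 ?invr_neq0 ?(wpnz HF).
  have wn := wpnz HF m.+1.
  have D' : p * s * w ^+ m.+1 - q * (u * s) != 0.
    have -> : p * s * w ^+ m.+1 - q * (u * s) = (p * s - q * (u / w ^+ m.+1 * s)) * w ^+ m.+1.
      by field.
    by rewrite mulf_neq0.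
  rewrite orbit_formula ?oner_neq0 //; apply: mx2_eq; rewrite /a /d /De; field; by rewrite ?oner_neq0 ?un ?sn ?wn ?D'.
- move=> r1 r2 h1 h2 [x [a [d [k1 [k2 [ha hd hk1 hk2 E]]]]]].
  have [k1n _] := hk1; have [k2n _] := hk2.
  have wz : forall g, (wpow w g == 0) = (g == None).
    by case=> [n|] /=; rewrite ?eqxx // (negbTE (wpnz HF n)).
  have wv : forall n, v (wpow w (Some n)) = n%:Z by move=> n; exact: vpow.
  move: E; case: h1 => [[g ->]|[g [hg ->]]]; case: h2 => [[g' ->]|[g' [hg' ->]]];
  move=> E; rewrite orbit_formula // in E;
  (have E1 := congr1 (fun M : 'M[F]_2 => M 1 0) E;
   have E2 := congr1 (fun M : 'M[F]_2 => M 1 1) E;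
   rewrite /= !mx2_10 !mx2_11 in E1 E2;
   have [Z1 Z2 V] := inv_lemma HF hd hk1 hk2 E1 E2; clear E E1 E2;
   move: Z1 Z2 V; rewrite ?wz ?oner_eq0 ?eqxx ?v1 ?subr0 ?sub0r);
  try revert hg; try revert hg'; case: g => [n|]; case: g' => [n'|] => //=; rewrite ?wv ?v1.
  all: rewrite ?(v1 HF) ?subr0 ?sub0r.
  all: intros; try exact: Ncoset_refl.
  all: match goal with H : is_true true -> is_true true -> _ |- _ => have hV := H isT isT end.
  all: first [ lia | (have e : n' = n by lia); rewrite e; exact: Ncoset_refl ].
Qed.
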